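(* For every $d\in\mathbb{N}$, $n(d)\le m(d)+d$.
   Context: Unit vectors $x_1,\dots,x_n\in\mathbb{C}^d$ form a weighted $2$-design for $\mathbb{CP}^{d-1}$ if there exist weights $w_1,\dots,w_n\ge 0$ such that $\sum_{k=1}^n w_k (x_k^{\otimes 2})(x_k^{\otimes 2})^*$ equals the orthogonal projection of $(\mathbb{C}^d)^{\otimes 2}$ onto the subspace of symmetric tensors. $n(d)$ denotes the smallest $n$ such that there exist $n$ unit vectors in $\mathbb{C}^d$ forming a weighted $2$-design for $\mathbb{CP}^{d-1}$. A Sidon set is a subset $S$ of a finite abelian group $G$ such that $a+b=c+d$ with $a,b,c,d\in S$ implies $\{a,b\}=\{c,d\}$. $m(d)$ denotes the smallest order $|G|$ of a finite abelian group $G$ containing a Sidon set of size $d$. *)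

(* Defs.v *)
From HB Require Import structures.
From mathcomp Require Import all_boot all_order all_algebra.
From mathcomp Require Import boolp reals complex.
Set Implicit Arguments. Unset Strict Implicit. Unset Printing Implicit Defensive.
Import Order.TTheory GRing.Theory Num.Theory.
Local Open Scope ring_scope.
Local Open Scope complex_scope.

(* Smallest natural number satisfying a (Prop) predicate; 0 if none exists
   (classical choice, as in the usual "min" of a set of naturals). *)
Definition least_nat (P : nat -> Prop) : nat :=
  match pselect (exists n, P n) with
  | left H => ex_minn (P := fun n => `[< P n >])
                (let: ex_intro n Pn := H in ex_intro _ n (asboolT Pn))
  | right _ => 0%N
  end.

Definition unit_vec (R : realType) (d : nat) (x : 'I_d -> R[i]) : Prop :=
  \sum_(i < d) `|x i| ^+ 2 = 1.

(* Entry ((i,j),(k,l)) of the orthogonal projection of (C^d)^{(x)2}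
   onto the symmetric tensors: (delta_ik delta_jl + delta_il delta_jk)/2. *)
Definition sym_proj (R : realType) (d : nat) (i j k l : 'I_d) : R[i] :=
  (((i == k) && (j == l))%:R + ((i == l) && (j == k))%:R) / 2.

(* The vectors x_1..x_n form a weighted 2-design for CP^{d-1}:
   there are weights w_k >= 0 with
   sum_k w_k (x_k (x) x_k)(x_k (x) x_k)^* = symmetric projection,
   written entrywise in the standard basis e_i (x) e_j of (C^d)^{(x)2};
   entry ((i,j),(k,l)) of (x(x)x)(x(x)x)^* is x_i x_j conj(x_k x_l). *)
Definition weighted_2design (R : realType) (d n : nat)
    (x : 'I_n -> 'I_d -> R[i]) : Prop :=
  exists w : 'I_n -> R,
    (forall t, 0 <= w t) /\
    forall i j k l : 'I_d,
      \sum_(t < n) (w t)%:C * (x t i * x t j * (x t k * x t l)^*)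
      = sym_proj R i j k l.

Definition n_design (R : realType) (d : nat) : nat :=
  least_nat (fun n => exists x : 'I_n -> 'I_d -> R[i],
                 (forall t, unit_vec (x t)) /\ weighted_2design x).

Definition sidon (G : finZmodType) (S : {set G}) : Prop :=
  forall a b c e, a \in S -> b \in S -> c \in S -> e \in S ->
    a + b = c + e -> [set a; b] = [set c; e].

Definition m_sidon (d : nat) : nat :=
  least_nat (fun m => exists G : finZmodType, #|G| = m /\
                 exists S : {set G}, #|S| = d /\ sidon S).

(* Main.v *)
Require Import Defs.
From mathcomp Require Import all_boot all_order all_algebra all_fingroup all_solvable all_field all_character.
From mathcomp Require Import boolp reals complex.
From mathcomp Require Import ring zify.
Set Implicit Arguments. Unset Strict Implicit. Unset Printing Implicit Defensive.
Import Order.TTheory GRing.Theory Num.Theory.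
Local Open Scope ring_scope.

Lemma conjcE (R : realType) (x : R[i]) : conjc x = x^*.
Proof. by []. Qed.

Lemma Ri_prim_root_exists (R : realType) n : (n > 0)%N -> exists z : R[i], n.-primitive_root z.
Proof.
pose p : {poly R[i]} := 'X^n - 1; have [r Dp] := closed_field_poly_normal p.
move=> n_gt0; rewrite (monicP _) ?monicXnsubC // scale1r in Dp.
have rn1: all n.-unity_root r by apply/allP=> z; rewrite -root_prod_XsubC -Dp.
have sz_r: (n < (size r).+1)%N.
  by rewrite -(size_prod_XsubC r id) -Dp size_XnsubC.
have [|z] := hasP (has_prim_root n_gt0 rn1 _ sz_r); last by exists z.
by rewrite -separable_prod_XsubC -Dp separable_Xn_sub_1 // pnatr_eq0 -lt0n.
Qed.

Lemma conjcM (R : realType) (a b : R[i]) : conjc (a * b) = conjc a * conjc b.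
Proof. exact: rmorphM. Qed.
Lemma conjcR (R : realType) (r : R) : conjc (r%:C)%C = (r%:C)%C.
Proof. by rewrite /conjc /= oppr0. Qed.
Lemma conjcN (R : realType) n : conjc (n%:R : R[i]) = n%:R.
Proof. exact: conjc_nat. Qed.


Section Chars.
Variables (R : realType) (G : finZmodType).
Let H := [set: G]%G.

Lemma abH : abelian H. Proof. exact: FinRing.zmod_abelian. Qed.
Lemma linH (i : Iirr H) : 'chi_i \is a linear_char.
Proof. by move/char_abelianP: abH. Qed.
Lemma cardH : #|H| = #|G|. Proof. by rewrite cardsT. Qed.
Lemma mpos : (0 < #|G|)%N. Proof. by rewrite -cardH cardG_gt0. Qed.

Lemma chi_unity (i : Iirr H) (g : G) : ('chi_i g) ^+ #|G| = 1.
Proof.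
rewrite -(lin_charX (linH i)) ?in_setT // -cardH expg_cardG ?in_setT //.
exact: lin_char1 (linH i).
Qed.

Lemma chi_sep (g : G) : g != 0 -> exists i : Iirr H, 'chi_i g != 1.
Proof.
move=> g0; apply/existsP; apply: contraT; rewrite negb_exists => /forallP all1.
have := @second_orthogonality_relation _ H g 1%g (group1 H).
rewrite class1G inE (negPf g0) mulr0n.
under eq_bigr => i _ do rewrite (lin_char1 (linH i)) conjC1 mulr1 (eqP (negbNE (all1 i))).
rewrite sumr_const card_ord => /eqP; rewrite pnatr_eq0.
have := card_Iirr_abelian abH; rewrite card_ord cardH => ->.
by rewrite eqn0Ngt mpos.
Qed.


Let z : algC := sval (C_prim_root_exists mpos).
Let zP : #|G|.-primitive_root z := svalP (C_prim_root_exists mpos).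
Let ze : R[i] := xchoose (Ri_prim_root_exists R mpos).
Let zeP : #|G|.-primitive_root ze := xchooseP (Ri_prim_root_exists R mpos).

Let f (w : algC) : R[i] :=
  if [pick j : 'I_#|G| | z ^+ j == w] is Some j then ze ^+ j else 0.

Lemma fE a : f (z ^+ a) = ze ^+ a.
Proof.
rewrite /f; case: pickP => [j /eqP|/(_ (Ordinal (ltn_pmod a mpos)))].
  by move/eqP; rewrite !(eq_prim_root_expr zP) => /eqP e; apply/eqP; rewrite (eq_prim_root_expr zeP) e.
by rewrite /= (prim_expr_mod zP) eqxx.
Qed.

Lemma chi_pow (i : Iirr H) g : exists a, 'chi_i g = z ^+ a.
Proof. by have [a ->] := prim_rootP zP (chi_unity i g); exists a. Qed.

Let psi (i : Iirr H) (g : G) := f ('chi_i g).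

Lemma psiM i a b : psi i (a + b) = psi i a * psi i b.
Proof.
rewrite /psi -FinRing.zmodMgE (lin_charM (linH i)) ?in_setT //.
by have [p ->] := chi_pow i a; have [q ->] := chi_pow i b; rewrite -exprD !fE exprD.
Qed.

Lemma ze_norm : `|ze| = 1.
Proof.
apply/eqP; rewrite -(pexpr_eq1 (n := #|G|)) ?normr_ge0 -?normrX ?(prim_expr_order zeP) ?normr1 //.
exact: mpos.
Qed.

Lemma psi_norm i a : psi i a * (psi i a)^* = 1.
Proof.
by rewrite /psi; have [p ->] := chi_pow i a; rewrite fE -normCK normrX ze_norm expr1n expr1n.
Qed.

Lemma psi0 i : psi i 0 = 1.
Proof. by rewrite /psi -FinRing.zmod1gE (lin_char1 (linH i)) -(expr0 z) fE expr0. Qed.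

Let pi (i0 i : Iirr H) := cfIirr ('chi_i0 * 'chi_i).

Lemma piE i0 i : 'chi_(pi i0 i) = 'chi_i0 * 'chi_i.
Proof. by rewrite cfIirrE // lin_char_irr // rpredM // linH. Qed.

Lemma pi_inj i0 : injective (pi i0).
Proof.
move=> a b e; apply: irr_inj; apply/cfunP => x.
have := congr1 (fun j : Iirr H => 'chi_j x) e; rewrite /= !piE !cfunE.
by apply: mulfI; rewrite (lin_char_neq0 (linH i0)) ?in_setT.
Qed.

Lemma psi_prod i0 i g : psi (pi i0 i) g = psi i0 g * psi i g.
Proof.
rewrite /psi piE cfunE.
by have [p ->] := chi_pow i0 g; have [q ->] := chi_pow i g; rewrite -exprD !fE exprD.
Qed.

Lemma psi_sum g : \sum_i psi i g = (g == 0)%:R * #|G|%:R.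
Proof.
have [->|g0] := eqVneq g 0.
  under eq_bigr => i _ do rewrite psi0.
  by rewrite sumr_const (card_Iirr_abelian abH) cardH mul1r.
have [i0 ci0] := chi_sep g0.
have c1 : psi i0 g != 1.
  move: ci0; rewrite /psi; have [p ->] := chi_pow i0 g; rewrite fE.
  by rewrite -{1}(expr0 z) -(expr0 ze) (eq_prim_root_expr zP) (eq_prim_root_expr zeP).
rewrite mul0r; set S := \sum_i _.
have eS : S = psi i0 g * S.
  rewrite {1}/S (reindex_inj (@pi_inj i0)) /= mulr_sumr.
  by apply: eq_bigr => i _; rewrite psi_prod.
have : (1 - psi i0 g) * S = 0 by rewrite mulrBl mul1r -eS subrr.
by move/eqP; rewrite mulf_eq0 subr_eq0 eq_sym (negPf c1) => /eqP.
Qed.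

Lemma chars_exist : exists psi : 'I_#|G| -> G -> R[i],
  [/\ (forall t a b, psi t (a + b) = psi t a * psi t b),
      (forall t a, psi t a * (psi t a)^* = 1) &
      (forall g, \sum_t psi t g = (g == 0)%:R * #|G|%:R)].
Proof.
have e : #|Iirr H| = #|G| by rewrite (card_Iirr_abelian abH) cardH.
pose h (t : 'I_#|G|) : Iirr H := enum_val (cast_ord (esym e) t).
have hb : bijective h.
  exists (fun i => cast_ord e (enum_rank i)) => t; rewrite /h.
    by rewrite enum_valK cast_ordKV.
  by rewrite cast_ordK enum_rankK.
exists (fun t => psi (h t)); split => [t a b|t a|g]; first exact: psiM.
  exact: psi_norm.
rewrite -psi_sum (reindex h) //; exact: onW_bij.
Qed.
End Chars.


Section Design.
Variables (R : realType) (G : finZmodType) (d : nat) (S : {set G}).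
Hypotheses (eS : #|S| = d) (sS : sidon S) (d0 : (0 < d)%N).

Let s (i : 'I_d) : G := enum_val (cast_ord (esym eS) i).
Lemma s_inj : injective s.
Proof. by move=> i j /enum_val_inj /cast_ord_inj. Qed.
Lemma sS_in i : s i \in S. Proof. exact: enum_valP. Qed.

Lemma s_sidon i j k l :
  (s i + s j == s k + s l) = ((i == k) && (j == l)) || ((i == l) && (j == k)).
Proof.
apply/eqP/idP => [e|].
  have := sS (sS_in i) (sS_in j) (sS_in k) (sS_in l) e.
  move/setP/(_ (s i)); rewrite !inE eqxx /= => /esym/orP[]/eqP/s_inj ik.
    subst k; have /s_inj -> : s j = s l by apply: (addrI (s i)).
    by rewrite !eqxx.
  subst l; have /s_inj -> : s j = s k by apply: (addrI (s i)); rewrite e addrC.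
  by rewrite !eqxx orbT.
by case/orP => /andP[/eqP-> /eqP->] //; rewrite addrC.
Qed.


Lemma allE (i j k l : 'I_d) :
  [&& i == j, i == k & i == l] = ((i == k) && (j == l)) && ((i == l) && (j == k)).
Proof.
apply/idP/idP.
  by case/and3P => /eqP <- /eqP <- /eqP <-; rewrite !eqxx.
by case/andP => /andP[/eqP <- /eqP <-] /andP[/eqP -> _]; rewrite !eqxx.
Qed.

Lemma design_exists : exists x : 'I_(#|G| + d) -> 'I_d -> R[i],
  (forall t, unit_vec (x t)) /\ weighted_2design x.
Proof.
have [psi [psiM psiN psiS]] := chars_exist R G.
have psiN' t a : psi t a * conjc (psi t a) = 1 by rewrite conjcE psiN.
have psi0 t : psi t 0 = 1.
  have := psiN' t 0; have e := psiM t 0 0; rewrite addr0 in e.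
  by move=> h; rewrite -h {2}e -mulrA h mulr1.
have psiC t a : conjc (psi t a) = psi t (- a).
  by rewrite -[LHS]mul1r -(psi0 t) -(subrr a) psiM mulrAC psiN' mul1r.
pose c : R := Num.sqrt d%:R.
have c2 : c ^+ 2 = d%:R by rewrite sqr_sqrtr // ler0n.
have dn0 : (d%:R : R) != 0 by rewrite pnatr_eq0 -lt0n.
have cn0 : c != 0 by apply: contraNneq dn0 => c0; rewrite -c2 c0 expr0n.
have mn0 : (#|G|%:R : R) != 0 by rewrite pnatr_eq0 -lt0n mpos.
pose x (t : 'I_(#|G| + d)) (i : 'I_d) : R[i] :=
  match split t with inl t' => (c^-1)%:C%C * psi t' (s i) | inr a => (a == i)%:R end.
have xl t i : x (lshift d t) i = (c^-1)%:C%C * psi t (s i) by rewrite /x (unsplitK (inl _ t)).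
have xr a i : x (rshift #|G| a) i = (a == i)%:R by rewrite /x (unsplitK (inr _ a)).
exists x; split.
  move=> t; rewrite /unit_vec /x; case: (split t) => [t'|a].
    under eq_bigr => i _ do rewrite normCK -conjcE conjcM conjcR mulrACA psiN' mulr1.
    rewrite sumr_const card_ord -rmorphM -rmorphMn /=; congr (_%:C%C).
    by rewrite -expr2 exprVn c2 -mulr_natr mulVf.
  rewrite (bigD1 a) //= big1 => [|i ai]; first by rewrite eqxx normr1 expr1n addr0.
  by rewrite eq_sym (negPf ai) normr0 expr0n.
pose w0 : R := d%:R ^+ 2 / (2 * #|G|%:R).
exists (fun t => if split t is inl _ then w0 else 2^-1); split.
  move=> t; case: (split t) => _; last by rewrite invr_ge0 ler0n.
  by rewrite /w0 divr_ge0 ?exprn_ge0 ?mulr_ge0 ?ler0n.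
move=> i j k l; rewrite big_split_ord /=.
have -> : \sum_(t < #|G|) ((if split (lshift d t) is inl _ then w0 else 2^-1)%:C%C *
     (x (lshift d t) i * x (lshift d t) j * conjc (x (lshift d t) k * x (lshift d t) l)))
   = (w0 * c^-1 ^+ 4)%:C%C * \sum_(t < #|G|) psi t (s i + s j - (s k + s l)).
  rewrite mulr_sumr; apply: eq_bigr => t _.
  rewrite (unsplitK (inl _ t)) !xl !conjcM conjcR !psiC opprD !psiM.
  rewrite !rmorphM /= ?rmorphXn /=; ring.
have -> : \sum_(a < d) ((if split (rshift #|G| a) is inl _ then w0 else 2^-1)%:C%C *
     (x (rshift #|G| a) i * x (rshift #|G| a) j * conjc (x (rshift #|G| a) k * x (rshift #|G| a) l)))
   = (2^-1)%:C%C * ([&& i == j, i == k & i == l])%:R.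
  rewrite (bigD1 i) //= big1 => [|a ai].
    rewrite (unsplitK (inr _ i)) !xr -natrM -natrM conjcN -natrM eqxx !mulnb addr0 //.
  rewrite (unsplitK (inr _ a)) !xr -natrM -natrM conjcN -natrM !mulnb.
  by rewrite (negPf ai) mulr0.
rewrite psiS subr_eq0 s_sidon allE /sym_proj mulrCA.
have -> : (w0 * c^-1 ^+ 4)%:C%C * #|G|%:R = (2^-1 : R)%:C%C.
  rewrite -(rmorph_nat (real_complex R)) -rmorphM; congr (_%:C%C).
  have c4 : c ^+ 4 = d%:R ^+ 2 by rewrite -c2 -exprM.
  rewrite /w0 exprVn c4; field.
  by rewrite mn0 dn0.
rewrite fmorphV rmorph_nat.
case: (_ && _); case: (_ && _) => /=; rewrite ?mul0r ?mul1r ?addr0 ?add0r ?mulr0 ?mulr1 //;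
  by rewrite ?addr0 ?mulrDl ?mul1r ?mul0r.
Qed.
End Design.


Lemma sidon_exists d : exists G : finZmodType, exists S : {set G}, #|S| = d /\ sidon S.
Proof.
have [p ltp pr] := prime_above d.+2.
pose F := 'F_p.
have natI (a b : nat) : (a < p)%N -> (b < p)%N -> (a%:R : F) = b%:R -> a = b.
  move=> ap bp e; have := congr1 (fun x : 'F_p => nat_of_ord x) e; rewrite /= !(val_Fp_nat pr) !modn_small //.
have two : (2 : F) != 0.
  apply/eqP => e; have p2 : (2 < p)%N by apply: leq_trans ltp.
  by have := natI 2 0 p2 (ltnW (ltnW p2)) e.
pose f (i : 'I_d) : 'rV[F]_2 := \row_(t < 2) (i%:R ^+ t.+1).
have f_inj : injective f.
  move=> i j /rowP/(_ ord0); rewrite !mxE !expr1 => e; apply: val_inj; apply: natI e.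
    by have := ltn_ord i; lia.
  by have := ltn_ord j; lia.
have fI (i j : 'I_d) : (i%:R : F) = j%:R -> i = j.
  move=> e; apply: val_inj; apply: natI e.
    by have := ltn_ord i; lia.
  by have := ltn_ord j; lia.
exists [the finZmodType of 'rV[F]_2], [set f i | i in 'I_d]; split.
  by rewrite card_imset // card_ord.
move=> a b c e /imsetP[i _ ->] /imsetP[j _ ->] /imsetP[k _ ->] /imsetP[l _ ->] eq.
have [e1 e2] : (i%:R + j%:R = k%:R + l%:R :> F) /\ (i%:R ^+ 2 + j%:R ^+ 2 = k%:R ^+ 2 + l%:R ^+ 2 :> F).
  by split; [have := congr1 (fun M : 'rV[F]_2 => M 0 ord0) eq | have := congr1 (fun M : 'rV[F]_2 => M 0 ord_max) eq]; rewrite /= !mxE.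
have h : (2 : F) * ((i%:R - k%:R) * (i%:R - l%:R)) = 0.
  set x : F := i%:R; set y : F := j%:R; set u : F := k%:R; set v : F := l%:R.
  have -> : 2 * ((x - u) * (x - v)) = (x + y - (u + v)) * (x + y - (u + v) - 2 * y) + (x ^+ 2 + y ^+ 2 - (u ^+ 2 + v ^+ 2)) by ring.
  by rewrite e1 e2 !subrr mul0r addr0.
move/eqP: h; rewrite mulf_eq0 (negPf two) /= mulf_eq0 !subr_eq0 => /orP[]/eqP/fI ik.
  subst k; have /f_inj -> : f j = f l by apply: (addrI (f i)).
  by [].
subst l; have /f_inj -> : f j = f k by apply: (addrI (f i)); rewrite eq addrC.
by rewrite setUC.
Qed.


Lemma least_nat_le (P : nat -> Prop) n : P n -> (least_nat P <= n)%N.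
Proof.
move=> Pn; rewrite /least_nat; case: pselect => [H|[]]; last by exists n.
case: ex_minnP => k _ /(_ n); apply; exact: asboolT.
Qed.

Lemma least_natP (P : nat -> Prop) : (exists n, P n) -> P (least_nat P).
Proof.
move=> ex; rewrite /least_nat; case: pselect => [H|//].
by case: ex_minnP => k /asboolP.
Qed.

Theorem mainTheorem2 (R : realType) (d : nat) :
  (n_design R d <= m_sidon d + d)%N.
Proof.
case: (posnP d) => [->|d0].
  apply: leq_trans (leq0n _); rewrite /n_design; apply: (least_nat_le (n := 0%N)).
  exists (fun t => fun i => 0); split; first by case.
  by exists (fun _ => 0); split; [case | case].
have [G0 [S0 [eS0 sS0]]] := sidon_exists d.
have [G [eG [S [eS sS]]]] : exists G : finZmodType, #|G| = m_sidon d /\ exists S : {set G}, #|S| = d /\ sidon S.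
  apply: (least_natP (P := fun m => exists G : finZmodType, #|G| = m /\ exists S : {set G}, #|S| = d /\ sidon S)).
  by exists #|G0|, G0; split => //; exists S0.
rewrite -eG /n_design; apply: (least_nat_le (n := (#|G| + d)%N)).
exact: design_exists eS sS d0.
Qed.
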